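(* Let $G'$ be an inflation of the causal structure $G$. A set $\mathbf{V}\subseteq\mathcal{O}(G')$ of observed nodes of $G'$ is injectable if and only if every two-element subset of $\mathbf{V}$ is injectable. Equivalently, the injectable sets are exactly the cliques of the undirected graph on $\mathcal{O}(G')$ in which two nodes are adjacent iff the pair is injectable.
   Context: A causal structure $G$ is a finite DAG with nodes partitioned into observed $\mathcal{O}(G)$ and latent. $\mathrm{An}_G(\mathbf{X})$ denotes the set of ancestors of $\mathbf{X}$ including $\mathbf{X}$; the ancestral subgraph of $\mathbf{X}$ is the induced subgraph on $\mathrm{An}_G(\mathbf{X})$. Inflation: every node of $G'$ is a copy $X_i$ of a node $X$ of $G$, inheriting observed/latent status; $\mathbf{X}'\sim\mathbf{X}$ means $\mathbf{X}'$ contains exactly one copy of each node of $\mathbf{X}$ and nothing else, and for subgraphs $\sim$ also requires edges to correspond under dropping copy-indices. $G'$ is an inflation of $G$ if $\mathrm{Pa}_{G'}(X_i)\sim\mathrm{Pa}_G(X)$ for every node $X_i$ of $G'$. $\mathbf{V}'\subseteq\mathcal{O}(G')$ is injectable if there is $\mathbf{V}\subseteq\mathcal{O}(G)$ with $\mathbf{V}'\sim\mathbf{V}$ and the ancestral subgraph of $\mathbf{V}'$ in $G'$ $\sim$ the ancestral subgraph of $\mathbf{V}$ in $G$. *)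

(* Defs.v *)
From mathcomp Require Import all_boot.
Set Implicit Arguments. Unset Strict Implicit. Unset Printing Implicit Defensive.

(* A causal structure: a finite DAG on node type T, edge relation [e]
   ([e x y] means x -> y, i.e. x is a parent of y), and a predicate [obs]
   of observed nodes (the others are latent). *)
Definition acyclic (T : finType) (e : rel T) : Prop :=
  forall x y : T, e x y -> ~~ connect e y x.

Definition parents (T : finType) (e : rel T) (x : T) : {set T} :=
  [set y | e y x].

Definition ancestors (T : finType) (e : rel T) (X : {set T}) : {set T} :=
  [set a | [exists x in X, connect e a x]].

Definition observed (T : finType) (obs : pred T) : {set T} := [set x | obs x].

(* [p] maps each node of G' to the node of G of which it is a copy.
   X' ~ X : X' contains exactly one copy of each node of X and nothing else. *)
Definition sim_set (T T' : finType) (p : T' -> T) (X' : {set T'}) (X : {set T}) : Prop :=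
  {in X' &, injective p} /\ p @: X' = X.

Definition sim_subgraph (T T' : finType) (e : rel T) (e' : rel T') (p : T' -> T)
    (X' : {set T'}) (X : {set T}) : Prop :=
  sim_set p X' X /\ {in X' &, forall x y, e' x y = e (p x) (p y)}.

Definition inflation (T T' : finType) (e : rel T) (obs : pred T)
    (e' : rel T') (obs' : pred T') (p : T' -> T) : Prop :=
  (forall x : T', obs' x = obs (p x)) /\
  (forall x : T', sim_set p (parents e' x) (parents e (p x))).

Definition injectable (T T' : finType) (e : rel T) (obs : pred T)
    (e' : rel T') (obs' : pred T') (p : T' -> T) (V' : {set T'}) : Prop :=
  V' \subset observed obs' /\
  exists V : {set T}, V \subset observed obs /\ sim_set p V' V /\
    sim_subgraph e e' p (ancestors e' V') (ancestors e V).

(* Main.v *)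
Require Import Defs.
From mathcomp Require Import all_boot.

Section S.
Variables (T T' : finType) (e : rel T) (obs : pred T)
    (e' : rel T') (obs' : pred T') (p : T' -> T).
Hypothesis Hinf : inflation e obs e' obs' p.

Lemma edge_fwd u v : e' u v -> e (p u) (p v).
Proof.
move=> Huv; have [_ Hp] := Hinf; have [_ Him] := Hp v.
have : p u \in p @: parents e' v by apply: imset_f; rewrite inE.
by rewrite Him inE.
Qed.

Lemma lift_fwd a b : connect e' a b -> connect e (p a) (p b).
Proof.
move/connectP=> [s]; elim: s a => [|c s IH] a /=.
  by move=> _ ->; exact: connect0.
move=> /andP[Hac Hs] Hl.
apply: (@connect_trans _ e (p c)); last exact: (IH c Hs Hl).
apply: connect1; exact: edge_fwd.
Qed.

Lemma lift_bwd s a x' : path e a s -> last a s = p x' ->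
  exists2 a', p a' = a & connect e' a' x'.
Proof.
elim: s a => [|b s IH] a /=.
  by move=> _ ->; exists x' => //; exact: connect0.
move=> /andP[Hab Hs] Hl.
have [b' Hb' Hc] := IH b Hs Hl.
have [_ Hp] := Hinf; have [_ Him] := Hp b'.
have : a \in parents e (p b') by rewrite inE Hb'.
rewrite -Him => /imsetP[a' Ha' ->].
exists a' => //; apply: connect_trans Hc; apply: connect1; by rewrite inE in Ha'.
Qed.

Lemma anc_map S : p @: ancestors e' S = ancestors e (p @: S).
Proof.
apply/setP=> z; apply/imsetP/idP.
- move=> [a' Ha' ->]; move: Ha'; rewrite !inE => /existsP[x /andP[Hx Hc]].
  apply/existsP; exists (p x); rewrite imset_f //=; exact: lift_fwd.
- rewrite inE => /existsP[v /andP[/imsetP[x Hx ->] /connectP[s Hs Hl]]].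
  have [a' Ha' Hc] := @lift_bwd s z x Hs (esym Hl).
  exists a' => //; rewrite inE; apply/existsP; exists x; by rewrite Hx.
Qed.

Lemma anc_sub (S : {set T'}) : S \subset ancestors e' S.
Proof. apply/subsetP=> x Hx; rewrite inE; apply/existsP; exists x; by rewrite Hx connect0. Qed.

Lemma anc_mono (S1 S2 : {set T'}) : S1 \subset S2 -> ancestors e' S1 \subset ancestors e' S2.
Proof.
move/subsetP=> H; apply/subsetP=> a; rewrite !inE => /existsP[x /andP[Hx Hc]].
apply/existsP; exists x; by rewrite H.
Qed.

Lemma inj_char V' : injectable e obs e' obs' p V' <->
  V' \subset observed obs' /\ {in ancestors e' V' &, injective p}.
Proof.
split.
- by move=> [H [V [_ [_ [[Hi _] _]]]]].
- move=> [Hobs Hinj]; split => //; exists (p @: V'); split.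
    apply/subsetP=> z /imsetP[x Hx ->].
    move/subsetP: Hobs => /(_ x Hx); rewrite !inE; have [Ho _] := Hinf; by rewrite Ho.
  split.
    split => //; move=> x y Hx Hy; apply: Hinj; by apply: (subsetP (anc_sub V')).
  split; first by split => //; exact: anc_map.
  move=> x y Hx Hy; apply/idP/idP; first exact: edge_fwd.
  move=> Hxy; have [_ Hp] := Hinf; have [_ Him] := Hp y.
  have : p x \in parents e (p y) by rewrite inE.
  rewrite -Him => /imsetP[z Hz Hpz].
  rewrite inE in Hz.
  have Hzin : z \in ancestors e' V'.
    move: Hy; rewrite !inE => /existsP[w /andP[Hw Hc]].
    apply/existsP; exists w; rewrite Hw /=; apply: (@connect_trans _ e' y); last exact: Hc.
    exact: connect1 Hz.
  by rewrite (Hinj _ _ Hx Hzin Hpz).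
Qed.

End S.

Theorem mainTheorem4 (T T' : finType) (e : rel T) (obs : pred T)
    (e' : rel T') (obs' : pred T') (p : T' -> T) :
  acyclic e -> acyclic e' -> inflation e obs e' obs' p ->
  forall V' : {set T'}, V' \subset observed obs' ->
    injectable e obs e' obs' p V' <->
    (forall x y, x \in V' -> y \in V' -> injectable e obs e' obs' p [set x; y]).
Proof.
move=> _ _ Hinf V' Hobs; have Hc := @inj_char _ _ _ _ _ _ _ Hinf V'; split.
- move=> /Hc [_ Hinj] x y Hx Hy.
  have Hsub : [set x; y] \subset V'.
    by apply/subsetP=> z; rewrite !inE => /orP[] /eqP ->.
  apply/(@inj_char _ _ _ _ _ _ _ Hinf); split; first exact: subset_trans Hsub Hobs.
  move=> a b Ha Hb; apply: Hinj; exact: (subsetP (@anc_mono _ e' _ _ Hsub)).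
- move=> H; apply/Hc; split => // a b Ha Hb.
  move: (Ha) (Hb); rewrite !inE => /existsP[x /andP[Hx Hcx]] /existsP[y /andP[Hy Hcy]].
  have [_ Hi] := (@inj_char _ _ _ _ _ _ _ Hinf [set x; y]).1 (H x y Hx Hy).
  apply: Hi; rewrite inE; apply/existsP.
  + by exists x; rewrite !inE eqxx.
  + by exists y; rewrite !inE eqxx orbT.
Qed.
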